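(* Let $(R,\mathfrak m)$ be a Noetherian local ring and $M$ a finitely generated $R$-module with $\dim M=d\ge 1$. Let $k$ and $\ell$ be two positive integers. Then there exists an integer $n_3>\ell$ such that $$(\mathfrak m^{n_3}M+H^0_{\mathfrak m}(M)):_M\mathfrak m^{k}\subseteq \mathfrak m^{\ell}M+H^0_{\mathfrak m}(M).$$
   Context: For a submodule $N\subseteq M$ and an ideal $J$, $N:_MJ=\{x\in M: Jx\subseteq N\}$. $H^0_{\mathfrak m}(M)$ is the submodule of elements of $M$ annihilated by some power of $\mathfrak m$. *)

(* Defs.v *)
From HB Require Import structures.
From mathcomp Require Import all_boot all_order all_algebra.
Set Implicit Arguments. Unset Strict Implicit. Unset Printing Implicit Defensive.
Import GRing.Theory.
Local Open Scope ring_scope.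

Section CommAlg.
Variable R : comNzRingType.

Definition ideal (I : R -> Prop) : Prop :=
  I 0 /\ (forall x y, I x -> I y -> I (x + y)) /\ (forall r x, I x -> I (r * x)).

Definition prime_ideal (P : R -> Prop) : Prop :=
  ideal P /\ ~ P 1 /\ (forall x y, P (x * y) -> P x \/ P y).

Definition maximal_ideal (m : R -> Prop) : Prop :=
  ideal m /\ ~ m 1 /\
  (forall J, ideal J -> (forall x, m x -> J x) -> (forall x, J x -> m x) \/ J 1).

Definition local_ring (m : R -> Prop) : Prop :=
  maximal_ideal m /\ (forall J, maximal_ideal J -> forall x, J x <-> m x).

Definition noetherian : Prop :=
  forall I : nat -> R -> Prop, (forall n, ideal (I n)) ->
    (forall n x, I n x -> I n.+1 x) ->
    exists N, forall n x, (N <= n)%N -> I n x -> I N x.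

Definition ideal_gen (S : R -> Prop) : R -> Prop :=
  fun x => forall I, ideal I -> (forall y, S y -> I y) -> I x.

Fixpoint ideal_pow (m : R -> Prop) (n : nat) : R -> Prop :=
  match n with
  | O => fun _ => True
  | S n' => ideal_gen (fun x => exists a b, m a /\ ideal_pow m n' b /\ x = a * b)
  end.

Variable M : lmodType R.

Definition submodule (N : M -> Prop) : Prop :=
  N 0 /\ (forall x y, N x -> N y -> N (x + y)) /\ (forall r x, N x -> N (r *: x)).

Definition submod_gen (S : M -> Prop) : M -> Prop :=
  fun x => forall N, submodule N -> (forall y, S y -> N y) -> N x.

Definition fin_gen : Prop :=
  exists s : seq M, forall x : M, exists c : 'I_(size s) -> R,
    x = \sum_(i < size s) c i *: s`_i.

Definition ideal_mul_mod (I : R -> Prop) : M -> Prop :=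
  submod_gen (fun y => exists a x, I a /\ y = a *: x).

Definition submod_add (N1 N2 : M -> Prop) : M -> Prop :=
  fun x => exists y z, N1 y /\ N2 z /\ x = y + z.

Definition submod_colon (N : M -> Prop) (J : R -> Prop) : M -> Prop :=
  fun x => forall a, J a -> N (a *: x).

Definition H0 (m : R -> Prop) : M -> Prop :=
  fun x => exists n, forall a, ideal_pow m n a -> a *: x = 0.

Definition ann : R -> Prop := fun a => forall x : M, a *: x = 0.

(* Krull dimension of M (= dim R/Ann M) is at least n: there is a strict chain
   P_0 < P_1 < ... < P_n of prime ideals containing Ann(M). *)
Definition mod_dim_ge (n : nat) : Prop :=
  exists P : nat -> R -> Prop,
    (forall i, (i <= n)%N -> prime_ideal (P i)) /\
    (forall a, ann a -> P 0%N a) /\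
    (forall i, (i < n)%N -> (forall x, P i x -> P i.+1 x) /\ exists x, P i.+1 x /\ ~ P i x).

End CommAlg.

(* Main.v *)
Require Import Defs.
From mathcomp Require Import all_boot all_order all_algebra.
From mathcomp Require Import ring.
From Stdlib Require Import Classical ClassicalEpsilon.
Set Implicit Arguments. Unset Strict Implicit. Unset Printing Implicit Defensive.
Import GRing.Theory.
Local Open Scope ring_scope.


Section Ring.
Variable R : comNzRingType.
Implicit Types (m J I : R -> Prop).

Lemma gen_ideal (S : R -> Prop) : ideal (ideal_gen S).
Proof.
split; [|split].
- by move=> I [? _] _.
- move=> x y hx hy I hI hS; have [_ [hadd _]] := hI; apply: hadd; [exact: hx|exact: hy].
- move=> r x hx I hI hS; have [_ [_ hmul]] := hI; apply: hmul; exact: hx.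
Qed.

Lemma gen_in (S : R -> Prop) y : S y -> ideal_gen S y.
Proof. by move=> hy I _ hS; apply: hS. Qed.

Lemma gen_sub (S : R -> Prop) I : ideal I -> (forall y, S y -> I y) ->
  forall x, ideal_gen S x -> I x.
Proof. by move=> hI hS x hx; apply: hx. Qed.

Lemma pow_ideal m n : ideal (ideal_pow m n).
Proof.
case: n => [|n] /=; last exact: gen_ideal.
by split.
Qed.

Lemma pow_mul m n a b : m a -> ideal_pow m n b -> ideal_pow m n.+1 (a * b).
Proof. by move=> ha hb; apply: gen_in; exists a, b. Qed.

Lemma pow_mono_ideal J J' : (forall x, J x -> J' x) ->
  forall n x, ideal_pow J n x -> ideal_pow J' n x.
Proof.
move=> hJ; elim=> [|n IH] x //= hx.
apply: (gen_sub (gen_ideal _) _ hx) => y [a [b [ha [hb ->]]]].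
by apply: gen_in; exists a, b; split; [apply: hJ|split; [apply: IH|]].
Qed.

Lemma pow_succ_sub m n x : ideal_pow m n.+1 x -> ideal_pow m n x.
Proof.
elim: n x => [|n IH] x // hx.
apply: (gen_sub (pow_ideal m n.+1) _ hx) => y [a [b [ha [hb ->]]]].
by apply: pow_mul => //; apply: IH.
Qed.

Lemma pow_mono m p q x : (q <= p)%N -> ideal_pow m p x -> ideal_pow m q x.
Proof.
move=> hqp; elim: p hqp x => [|p IH] hqp x hx.
  by move: hqp; rewrite leqn0 => /eqP ->.
move: hqp; rewrite leq_eqVlt => /orP [/eqP -> //|hlt].
by apply: IH => //; apply: pow_succ_sub.
Qed.

Lemma pow_expr J a t : J a -> ideal_pow J t (a ^+ t).
Proof.
move=> ha; elim: t => [|t IH] //=.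
by rewrite exprS; apply: pow_mul.
Qed.

Lemma ideal0 I : ideal I -> I 0. Proof. by case. Qed.
Lemma idealD I x y : ideal I -> I x -> I y -> I (x + y).
Proof. by case=> _ [h _]; apply: h. Qed.
Lemma idealM I r x : ideal I -> I x -> I (r * x).
Proof. by case=> _ [_ h]; apply: h. Qed.

Lemma pow_split J J' a : ideal J' ->
  (forall c, J c -> exists c' s, J' c' /\ c = c' + s * a) ->
  forall N p q b, (p + q = N)%N -> ideal_pow J N b ->
  exists j r, ideal_pow J' p j /\ b = j + r * a ^+ q.
Proof.
move=> hJ' hdec; elim=> [|N IH] p q b hpq hb.
  move: hpq => /eqP; rewrite addn_eq0 => /andP [/eqP -> /eqP ->].
  by exists b, 0; split => //; rewrite mul0r addr0.
have hI : ideal (fun b => exists j r, ideal_pow J' p j /\ b = j + r * a ^+ q).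
  split; [|split].
  - by exists 0, 0; split; [apply: ideal0; apply: pow_ideal|rewrite mul0r addr0].
  - move=> x y [j1 [r1 [h1 ->]]] [j2 [r2 [h2 ->]]].
    exists (j1 + j2), (r1 + r2); split; first exact: idealD (pow_ideal _ _) h1 h2.
    by rewrite mulrDl; rewrite addrACA.
  - move=> r x [j1 [r1 [h1 ->]]]; exists (r * j1), (r * r1); split.
      exact: idealM (pow_ideal _ _) h1.
    by rewrite mulrDr mulrA.
apply: (gen_sub hI _ hb) => y [c [b' [hc [hb' ->]]]].
clear hI hb.
case: p hpq => [|p] hpq.
  by exists (c * b'), 0; split => //; rewrite mul0r addr0.
case: q hpq => [|q] hpq.
  exists 0, (c * b'); split; first by apply: ideal0; apply: pow_ideal.
  by rewrite expr0 mulr1 add0r.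
have [c' [s [hc' ->]]] := hdec c hc.
have [j1 [r1 [hj1 e1]]] : exists j r, ideal_pow J' p j /\ b' = j + r * a ^+ q.+1.
  by apply: IH => //; move: hpq; rewrite addSn => -[].
have [j2 [r2 [hj2 e2]]] : exists j r, ideal_pow J' p.+1 j /\ b' = j + r * a ^+ q.
  by apply: IH => //; move: hpq; rewrite addnS => -[].
exists (c' * j1 + s * a * j2), (c' * r1 + s * r2); split.
  apply: idealD (pow_ideal _ _) _ _; first exact: pow_mul.
  exact: idealM (pow_ideal _ _) hj2.
rewrite mulrDl {1}e1 {1}e2 exprS; ring.
Qed.

End Ring.


Section Mod.
Variable R : comNzRingType.
Variable V : lmodType R.
Implicit Types (N U : V -> Prop).

Lemma smod0 N : submodule N -> N 0. Proof. by case. Qed.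
Lemma smodD N x y : submodule N -> N x -> N y -> N (x + y).
Proof. by case=> _ [h _]; apply: h. Qed.
Lemma smodZ N r x : submodule N -> N x -> N (r *: x).
Proof. by case=> _ [_ h]; apply: h. Qed.
Lemma smodN N x : submodule N -> N x -> N (- x).
Proof. by move=> hN hx; rewrite -scaleN1r; apply: smodZ. Qed.
Lemma smodB N x y : submodule N -> N x -> N y -> N (x - y).
Proof. by move=> hN hx hy; apply: smodD => //; apply: smodN. Qed.

Lemma sgen_smod (S : V -> Prop) : submodule (submod_gen S).
Proof.
split; [|split].
- by move=> I [? _] _.
- move=> x y hx hy I hI hS; apply: smodD => //; [exact: hx|exact: hy].
- move=> r x hx I hI hS; apply: smodZ => //; exact: hx.
Qed.

Lemma sgen_in (S : V -> Prop) y : S y -> submod_gen S y.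
Proof. by move=> hy I _ hS; apply: hS. Qed.

Lemma sgen_sub (S : V -> Prop) N : submodule N -> (forall y, S y -> N y) ->
  forall x, submod_gen S x -> N x.
Proof. by move=> hI hS x hx; apply: hx. Qed.

Lemma imm_smod I : submodule (ideal_mul_mod (M:=V) I).
Proof. exact: sgen_smod. Qed.

Lemma imm_in (I : R -> Prop) a x : I a -> ideal_mul_mod (M:=V) I (a *: x).
Proof. by move=> ha; apply: sgen_in; exists a, x. Qed.

Lemma imm_mono (I I' : R -> Prop) : (forall a, I a -> I' a) ->
  forall x, ideal_mul_mod (M:=V) I x -> ideal_mul_mod (M:=V) I' x.
Proof.
move=> hI x hx; apply: (sgen_sub (imm_smod I') _ hx) => y [a [z [ha ->]]].
by apply: imm_in; apply: hI.
Qed.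

Lemma sadd_smod N1 N2 : submodule N1 -> submodule N2 -> submodule (submod_add N1 N2).
Proof.
move=> h1 h2; split; [|split].
- by exists 0, 0; split; [apply: smod0|split; [apply: smod0|rewrite addr0]].
- move=> x y [a [b [ha [hb ->]]]] [c [d [hc [hd ->]]]].
  exists (a + c), (b + d); split; first exact: smodD.
  by split; [exact: smodD|rewrite addrACA].
- move=> r x [a [b [ha [hb ->]]]]; exists (r *: a), (r *: b).
  by split; [exact: smodZ|split; [exact: smodZ|rewrite scalerDr]].
Qed.

Lemma sadd_l N1 N2 x : submodule N2 -> N1 x -> submod_add N1 N2 x.
Proof. by move=> h hx; exists x, 0; split => //; split; [apply: smod0|rewrite addr0]. Qed.
Lemma sadd_r N1 N2 x : submodule N1 -> N2 x -> submod_add N1 N2 x.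
Proof. by move=> h hx; exists 0, x; split; [apply: smod0|split => //; rewrite add0r]. Qed.

Lemma H0_smod (m : R -> Prop) : submodule (H0 (M:=V) m).
Proof.
split; [|split].
- by exists 0%N => a _; rewrite scaler0.
- move=> x y [p hp] [q hq]; exists (maxn p q) => a ha.
  rewrite scalerDr hp ?hq ?addr0 //; apply: pow_mono ha.
    by rewrite leq_maxr. by rewrite leq_maxl.
- move=> r x [p hp]; exists p => a ha.
  by rewrite scalerA mulrC -scalerA hp // scaler0.
Qed.

Lemma imm_pow_mono (m : R -> Prop) p q x : (q <= p)%N ->
  ideal_mul_mod (M:=V) (ideal_pow m p) x -> ideal_mul_mod (M:=V) (ideal_pow m q) x.
Proof. by move=> h; apply: imm_mono => a; apply: pow_mono. Qed.

Fixpoint inspan (vs : seq V) (x : V) : Prop :=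
  match vs with
  | [::] => x = 0
  | v :: vs' => exists c w, inspan vs' w /\ x = c *: v + w
  end.

Lemma inspan_smod vs : submodule (inspan vs).
Proof.
elim: vs => [|v vs IH] /=.
  split; [done|split]; [by move=> x y -> ->; rewrite addr0|by move=> r x ->; rewrite scaler0].
split; [|split].
- by exists 0, 0; split; [apply: smod0|rewrite scale0r addr0].
- move=> x y [c [w [hw ->]]] [d [u [hu ->]]]; exists (c + d), (w + u).
  by split; [apply: smodD|rewrite scalerDl addrACA].
- move=> r x [c [w [hw ->]]]; exists (r * c), (r *: w).
  by split; [apply: smodZ|rewrite scalerDr scalerA].
Qed.

Lemma inspan_cat l1 l2 x y : inspan l1 x -> inspan l2 y -> inspan (l1 ++ l2) (x + y).
Proof.
elim: l1 x => [|v l1 IH] x /=; first by move=> -> hy; rewrite add0r.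
move=> [c [w [hw ->]]] hy; exists c, (w + y); split; first exact: IH.
by rewrite addrA.
Qed.

Definition noethV : Prop :=
  forall N : nat -> V -> Prop, (forall n, submodule (N n)) ->
    (forall n x, N n x -> N n.+1 x) ->
    exists K, forall n x, (K <= n)%N -> N n x -> N K x.

Lemma chain_mono (N : nat -> V -> Prop) : (forall n x, N n x -> N n.+1 x) ->
  forall i j x, (i <= j)%N -> N i x -> N j x.
Proof.
move=> h i j x hij; elim: j hij => [|j IH] hij hx.
  by move: hij; rewrite leqn0 => /eqP <-.
move: hij; rewrite leq_eqVlt => /orP [/eqP <- //|hlt].
by apply: h; apply: IH.
Qed.

Lemma noeth_span (hR : noetherian R) vs :
  forall N : nat -> V -> Prop, (forall n, submodule (N n)) ->
    (forall n x, N n x -> N n.+1 x) -> (forall n x, N n x -> inspan vs x) ->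
    exists K, forall n x, (K <= n)%N -> N n x -> N K x.
Proof.
elim: vs => [|v vs IH] N hN hch hin.
  exists 0%N => n x _ hx; have -> : x = 0 by apply: (hin n).
  exact: smod0.
pose A n (c : R) := exists w, inspan vs w /\ N n (c *: v + w).
have hA : forall n, ideal (A n).
  move=> n; split; [|split].
  - by exists 0; split; [apply: smod0; apply: inspan_smod|rewrite scale0r addr0; apply: smod0].
  - move=> x y [w [hw h1]] [u [hu h2]]; exists (w + u); split; first by apply: smodD => //; apply: inspan_smod.
    by rewrite scalerDl addrACA; apply: smodD.
  - move=> r x [w [hw h1]]; exists (r *: w); split; first by apply: smodZ => //; apply: inspan_smod.
    by rewrite -scalerA -scalerDr; apply: smodZ.
have [K1 hK1] := hR A hA (fun n c '(ex_intro w (conj hw h)) => ex_intro _ w (conj hw (hch _ _ h))).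
pose B n x := N n x /\ inspan vs x.
have hB : forall n, submodule (B n).
  move=> n; split; [|split].
  - by split; apply: smod0 => //; apply: inspan_smod.
  - by move=> x y [h1 h2] [h3 h4]; split; apply: smodD => //; apply: inspan_smod.
  - by move=> r x [h1 h2]; split; apply: smodZ => //; apply: inspan_smod.
have [K2 hK2] := IH B hB (fun n x '(conj h1 h2) => conj (hch _ _ h1) h2) (fun n x h => h.2).
exists (maxn K1 K2) => n x hn hx.
have [c [w [hw ex]]] := hin n x hx.
have hcA : A n c by exists w; rewrite -ex.
have [w' [hw' hN']] := hK1 n c (leq_trans (leq_maxl _ _) hn) hcA.
have hd : B n (w - w').
  split; last by apply: smodB => //; apply: inspan_smod.
  have -> : w - w' = x - (c *: v + w') by rewrite ex opprD addrACA subrr add0r.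
  apply: smodB => //; apply: (chain_mono hch (leq_trans (leq_maxl _ _) hn) hN').
have [hd1 _] := hK2 n _ (leq_trans (leq_maxr _ _) hn) hd.
have -> : x = (c *: v + w') + (w - w') by rewrite ex [w - w']addrC addrA addrK.
apply: smodD => //.
  exact: (chain_mono hch (leq_maxl _ _) hN').
exact: (chain_mono hch (leq_maxr _ _) hd1).
Qed.

End Mod.


Section Gen.
Variable R : comNzRingType.

Fixpoint inI (gs : seq R) (x : R) : Prop :=
  match gs with
  | [::] => x = 0
  | g :: gs' => exists r w, inI gs' w /\ x = r * g + w
  end.

Lemma inI_ideal gs : ideal (inI gs).
Proof.
elim: gs => [|g gs IH] /=.
  split; [done|split]; [by move=> x y -> ->; rewrite addr0|by move=> r x ->; rewrite mulr0].
split; [|split].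
- by exists 0, 0; split; [apply: ideal0|rewrite mul0r addr0].
- move=> x y [c [w [hw ->]]] [d [u [hu ->]]]; exists (c + d), (w + u).
  by split; [apply: idealD|rewrite mulrDl addrACA].
- move=> r x [c [w [hw ->]]]; exists (r * c), (r * w).
  by split; [apply: idealM|rewrite mulrDr mulrA].
Qed.

Lemma inI_sub gs (I : R -> Prop) : ideal I -> (forall g, g \in gs -> I g) ->
  forall x, inI gs x -> I x.
Proof.
move=> hI; elim: gs => [|g gs IH] hg x /=; first by move=> ->; apply: ideal0.
move=> [r [w [hw ->]]]; apply: idealD => //.
  by apply: idealM => //; apply: hg; rewrite mem_head.
by apply: IH => // h hh; apply: hg; rewrite in_cons hh orbT.
Qed.

Lemma fg_ideal (hR : noetherian R) (m : R -> Prop) : ideal m ->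
  exists gs, forall x, m x <-> inI gs x.
Proof.
move=> hm; apply: NNPP => hno.
have claim : forall L, (forall x, inI L x -> m x) -> exists y, m y /\ ~ inI L y.
  move=> L hL; apply: NNPP => hn; apply: hno; exists L => x; split; last exact: hL.
  by move=> hx; apply: NNPP => hc; apply: hn; exists x.
have hex : forall L : seq R, exists y, (forall x, inI L x -> m x) -> m y /\ ~ inI L y.
  move=> L; case: (classic (forall x, inI L x -> m x)) => hL.
    by have [y hy] := claim L hL; exists y.
  by exists 0.
pose f L := proj1_sig (constructive_indefinite_description _ (hex L)).
have hf : forall L, (forall x, inI L x -> m x) -> m (f L) /\ ~ inI L (f L).
  by move=> L; rewrite /f; case: constructive_indefinite_description.
pose Ls := fix Ls n := if n is n'.+1 then f (Ls n') :: Ls n' else [::].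
have hLs : forall n x, inI (Ls n) x -> m x.
  elim=> [|n IH] x /=; first by move=> ->; apply: ideal0.
  move=> [r [w [hw ->]]]; apply: idealD => //; last exact: IH.
  by apply: idealM => //; case: (hf _ IH).
have [N hN] := hR (fun n => inI (Ls n)) (fun n => inI_ideal _)
  (fun n x hx => ex_intro _ 0 (ex_intro _ x (conj hx (esym (etrans (congr1 (fun z => z + x) (mul0r _)) (add0r x)))))).
have h := hN N.+1 (f (Ls N)) (leqnSn N).
have [_ hn] := hf _ (hLs N).
apply: hn; apply: h => /=.
exists 1, 0; split; first exact: ideal0 (inI_ideal _).
by rewrite mul1r addr0.
Qed.

End Gen.


Section S.
Variable R : comNzRingType.
Variable V : lmodType R.
Hypothesis hV : noethV V.

Lemma S_prin (a : R) (U : V -> Prop) : submodule U ->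
  exists m0, forall y, (exists t, U (a ^+ t *: y)) ->
    (exists z u, U u /\ y = a ^+ m0 *: z + u) -> U y.
Proof.
move=> hU.
pose N j z := U (a ^+ j *: z).
have hN : forall j, submodule (N j).
  move=> j; split; [|split].
  - by rewrite /N scaler0; apply: smod0.
  - by move=> x y hx hy; rewrite /N scalerDr; apply: smodD.
  - by move=> r x hx; rewrite /N scalerA mulrC -scalerA; apply: smodZ.
have hch : forall j x, N j x -> N j.+1 x.
  by move=> j x hx; rewrite /N exprS -scalerA; apply: smodZ.
have [K hK] := hV hN hch.
exists K => y [t ht] [z [u [hu ey]]].
have hz : N (t + K) z.
  rewrite /N exprD -scalerA.
  have -> : a ^+ K *: z = y - u by rewrite ey addrK.
  by rewrite scalerDr scalerN; apply: smodB => //; apply: smodZ.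
have := hK _ _ (leq_addl t K) hz; rewrite /N => hKz.
by rewrite ey; apply: smodD.
Qed.

Lemma S_gen gs : forall J : R -> Prop, (forall x, J x <-> inI gs x) ->
  forall U : V -> Prop, submodule U ->
  exists n, forall y, (exists t, forall b, ideal_pow J t b -> U (b *: y)) ->
    submod_add (ideal_mul_mod (M:=V) (ideal_pow J n)) U y -> U y.
Proof.
elim: gs => [|a gs IH] J hJ U hU.
  exists 1%N => y _ [v [u [hv [hu ->]]]].
  suff -> : v = 0 by rewrite add0r.
  have hz : forall b, ideal_pow J 1 b -> b = 0.
    move=> b hb; apply: (gen_sub (I := fun x : R => x = 0) _ _ hb).
      by split; [|split]; [|move=> x1 y1 -> ->; rewrite addr0|move=> r x1 ->; rewrite mulr0].
    by move=> x [c [d [hc [_ ->]]]]; move/hJ: hc => /= ->; rewrite mul0r.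
  apply: (sgen_sub (N := fun x : V => x = 0) _ _ hv).
    by split; [|split]; [|move=> x1 y1 -> ->; rewrite addr0|move=> r x1 ->; rewrite scaler0].
  by move=> x [c [z [hc ->]]]; rewrite (hz c hc) scale0r.
pose J' := inI gs.
have hJ'J : forall x, J' x -> J x.
  by move=> x hx; apply/hJ; exists 0, x; split => //; rewrite mul0r add0r.
have hdec : forall c, J c -> exists c' s, J' c' /\ c = c' + s * a.
  by move=> c /hJ [r [w [hw ->]]]; exists w, r; split => //; rewrite addrC.
have [m0 hm0] := S_prin a hU.
pose Am (w : V) := exists z, w = a ^+ m0 *: z.
have hAm : submodule Am.
  split; [|split].
  - by exists 0; rewrite scaler0.
  - by move=> x y [z1 ->] [z2 ->]; exists (z1 + z2); rewrite scalerDr.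
  - by move=> r x [z ->]; exists (r *: z); rewrite !scalerA mulrC.
pose U' := submod_add Am U.
have hU' : submodule U' by apply: sadd_smod.
have [n1 hn1] := IH J' (fun x => conj id id) U' hU'.
exists (n1 + m0)%N => y [t ht] [v [u [hv [hu ey]]]].
have hv' : submod_add (ideal_mul_mod (M:=V) (ideal_pow J' n1)) Am v.
  apply: (sgen_sub (sadd_smod (imm_smod _ _) hAm) _ hv) => w [b [x [hb ->]]].
  have [j [r [hj ->]]] := pow_split (inI_ideal gs) hdec (erefl _) hb.
  exists (j *: x), (a ^+ m0 *: (r *: x)); split; first exact: imm_in.
  split; first by exists (r *: x).
  by rewrite scalerDl scalerA mulrC -scalerA.
have hyU' : U' y.
  apply: hn1.
    exists t => b hb; apply: sadd_r => //; apply: ht.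
    exact: pow_mono_ideal hJ'J _ _ hb.
  case: hv' => [v1 [w [hv1 [[z hz] ev]]]].
  exists v1, (w + u); split => //; split; last by rewrite ey ev addrA.
  by exists w, u; split; [exists z|split].
apply: hm0; first by exists t; apply: ht; apply: pow_expr; apply/hJ; exists 1, 0; split; [exact: ideal0 (inI_ideal _)|by rewrite mul1r addr0].
case: hyU' => [w [u' [[z ->] [hu' ->]]]].
by exists z, u'.
Qed.

End S.


Section Core.
Variable R : comNzRingType.
Variable M : lmodType R.

Lemma inspan_sum (s : seq M) (c : 'I_(size s) -> R) :
  inspan s (\sum_(i < size s) c i *: s`_i).
Proof.
elim: s c => [|v s IH] c /=; first by rewrite big_ord0.
rewrite big_ord_recl /=; exists (c ord0), (\sum_(i < size s) c (lift ord0 i) *: s`_i).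
split; first exact: (IH (fun i => c (lift ord0 i))).
by [].
Qed.

Lemma noeth_fg (hR : noetherian R) : fin_gen M -> noethV M.
Proof.
move=> [s hs] N hN hch; apply: (noeth_span hR (vs := s)) => // n x _.
by have [c ->] := hs x; apply: inspan_sum.
Qed.

Variable s : nat.
Definition dl (i : 'I_s) (v : M) : {ffun 'I_s -> M} := [ffun k => if k == i then v else 0].

Lemma dlD i c v w : dl i (c *: v + w) = c *: dl i v + dl i w.
Proof. by apply/ffunP => k; rewrite !ffunE; case: (k == i); rewrite ?scaler0 ?addr0. Qed.
Lemma dl0 i : dl i 0 = 0.
Proof. by apply/ffunP => k; rewrite !ffunE; case: (k == i). Qed.

Lemma inspan_map i vs x : inspan vs x -> inspan (map (dl i) vs) (dl i x).
Proof.
elim: vs x => [|v vs IH] x /=; first by move=> ->; rewrite dl0.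
by move=> [c [w [hw ->]]]; exists c, (dl i w); split; [apply: IH|rewrite dlD].
Qed.

Lemma ffun_sum (f : {ffun 'I_s -> M}) : f = \sum_i dl i (f i).
Proof.
apply/ffunP => k; rewrite sum_ffunE (bigD1 k) //= ffunE eqxx big1 ?addr0 // => j hj.
by rewrite ffunE eq_sym (negbTE hj).
Qed.

Lemma noeth_ffun (hR : noetherian R) : fin_gen M -> noethV {ffun 'I_s -> M}.
Proof.
move=> [vs hs] N hN hch.
pose L := flatten [seq map (dl i) vs | i <- index_enum 'I_s].
apply: (@noeth_span R {ffun 'I_s -> M} hR L N hN hch) => n f _.
rewrite (ffun_sum f) /L; elim: (index_enum 'I_s) => [|i r IH]; first by rewrite big_nil.
rewrite big_cons /=; apply: inspan_cat => //; apply: inspan_map.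
by have [c ->] := hs (f i); apply: inspan_sum.
Qed.

Lemma imm_ffun (I : R -> Prop) (f : {ffun 'I_s -> M}) :
  (forall i, ideal_mul_mod (M:=M) I (f i)) -> ideal_mul_mod (M:={ffun 'I_s -> M}) I f.
Proof.
move=> hf; rewrite (ffun_sum f); elim: (index_enum 'I_s) => [|i r IH].
  by rewrite big_nil; apply: smod0; apply: imm_smod.
rewrite big_cons; apply: (smodD (N := ideal_mul_mod (M:={ffun 'I_s -> M}) I)); [exact: imm_smod| |exact: IH].
have hsub : submodule (fun z : M => ideal_mul_mod (M:={ffun 'I_s -> M}) I (dl i z)).
  split; [|split].
  - by rewrite dl0; apply: smod0; apply: imm_smod.
  - move=> x y hx hy; rewrite -[x]scale1r dlD scale1r; exact: smodD (imm_smod _ _) hx hy.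
  - move=> c x hx; rewrite -[c *: x]addr0 dlD dl0 addr0; exact: smodZ (imm_smod _ _) hx.
apply: (sgen_sub hsub _ (hf i)) => y [a [x [ha ->]]].
by rewrite -[a *: x]addr0 dlD dl0 addr0; apply: imm_in.
Qed.

End Core.


Section Main.
Variable R : comNzRingType.
Variable M : lmodType R.
Variable m : R -> Prop.
Variable gs : seq R.
Hypothesis hgs : forall x, m x <-> inI gs x.

Lemma K_list (L : seq R) (w : M) : (forall g, g \in L -> H0 (M:=M) m (g *: w)) ->
  exists T, forall a b, inI L a -> ideal_pow m T b -> b *: (a *: w) = 0.
Proof.
elim: L => [|g L IH] hL.
  by exists 0%N => a b /= -> _; rewrite scale0r scaler0.
case: IH => [h hh|T' hT']; first by apply: hL; rewrite in_cons hh orbT.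
have [t ht] := hL g (mem_head _ _).
exists (maxn t T') => a b /= [r [a' [ha' ->]]] hb.
rewrite scalerDl scalerDr -scalerA scalerA mulrC -scalerA.
rewrite ht ?scaler0 ?add0r; last by apply: pow_mono hb; rewrite leq_maxl.
by apply: hT' => //; apply: pow_mono hb; rewrite leq_maxr.
Qed.

Lemma K_lem (w : M) : (forall i : 'I_(size gs), H0 (M:=M) m (gs`_i *: w)) ->
  H0 (M:=M) m w.
Proof.
move=> hw.
have hL : forall g, g \in gs -> H0 (M:=M) m (g *: w).
  move=> g hg; have hi : (index g gs < size gs)%N by rewrite index_mem.
  by have := hw (Ordinal hi); rewrite /= nth_index.
have [T hT] := K_list hL.
exists T.+1 => c hc.
have hI : ideal (fun c : R => c *: w = 0).
  split; [|split].
  - by rewrite scale0r.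
  - by move=> x y hx hy; rewrite scalerDl hx hy addr0.
  - by move=> r x hx; rewrite -scalerA hx scaler0.
apply: (gen_sub hI _ hc) => y [a [b [ha [hb ->]]]].
by rewrite mulrC -scalerA; apply: hT => //; apply/hgs.
Qed.


Lemma mem_inI g : g \in gs -> inI gs g.
Proof.
elim: gs => [|h L IH] //=; rewrite in_cons => /orP [/eqP ->|hg].
  by exists 1, 0; split; [exact: ideal0 (inI_ideal _)|rewrite mul1r addr0].
by exists 0, g; split; [exact: IH|rewrite mul0r add0r].
Qed.

Lemma core (hR : noetherian R) (hfg : fin_gen M) l : exists n, forall x : M,
  (forall a, m a -> submod_add (ideal_mul_mod (M:=M) (ideal_pow m n)) (H0 (M:=M) m) (a *: x)) ->
  submod_add (ideal_mul_mod (M:=M) (ideal_pow m l)) (H0 (M:=M) m) x.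
Proof.
pose s := size gs.
pose phi (x : M) : {ffun 'I_s -> M} := [ffun i : 'I_s => gs`_i *: x].
have phiD : forall r x y, phi (r *: x + y) = r *: phi x + phi y.
  by move=> r x y; apply/ffunP => i; rewrite !ffunE scalerDr !scalerA mulrC.
have phi0 : phi 0 = 0 by apply/ffunP => i; rewrite !ffunE scaler0.
pose U (y : {ffun 'I_s -> M}) := exists (z : M) (h : {ffun 'I_s -> M}), ideal_mul_mod (M:=M) (ideal_pow m l) z /\
  (forall i, H0 (M:=M) m (h i)) /\ y = phi z + h.
have hU : submodule U.
  split; [|split].
  - exists 0, 0; split; first by apply: smod0; apply: imm_smod.
    split; last by rewrite phi0 addr0.
    by move=> i; rewrite ffunE; apply: smod0; apply: H0_smod.
  - move=> x y [z1 [h1 [hz1 [hh1 ->]]]] [z2 [h2 [hz2 [hh2 ->]]]].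
    exists (z1 + z2), (h1 + h2); split; first exact: (smodD (imm_smod M _) hz1 hz2).
    split; first by move=> i; rewrite ffunE; exact: (smodD (H0_smod M m) (hh1 i) (hh2 i)).
    have -> : phi (z1 + z2) = phi z1 + phi z2 by apply/ffunP => i; rewrite !ffunE scalerDr.
    by rewrite addrACA.
  - move=> r x [z [h [hz [hh ->]]]]; exists (r *: z), (r *: h).
    split; first exact: (smodZ r (imm_smod M _) hz).
    split; first by move=> i; rewrite ffunE; exact: (smodZ r (H0_smod M m) (hh i)).
    have -> : phi (r *: z) = r *: phi z by apply/ffunP => i; rewrite !ffunE !scalerA mulrC.
    by rewrite scalerDr.
have [n hn] := S_gen (noeth_ffun (M:=M) (s:=s) hR hfg) hgs hU.
exists n => x hx.
have hphi : U (phi x).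
  apply: hn.
    exists l => b hb; exists (b *: x), 0; split; first exact: imm_in.
    split; first by move=> i; rewrite ffunE; apply: smod0; apply: H0_smod.
    by rewrite addr0; apply/ffunP => i; rewrite !ffunE !scalerA mulrC.
  have : forall i : 'I_s, exists p : M * M, ideal_mul_mod (M:=M) (ideal_pow m n) p.1 /\
      H0 (M:=M) m p.2 /\ gs`_i *: x = p.1 + p.2.
    move=> i; have [v [h [hv [hh e]]]] := hx (gs`_i) (proj2 (hgs _) (mem_inI (mem_nth 0 (ltn_ord i)))).
    by exists (v, h).
  move=> /fin_all_exists [P hP].
  exists [ffun i => (P i).1], [ffun i => (P i).2]; split.
    by apply: imm_ffun => i; rewrite ffunE; case: (hP i).
  split.
    exists 0, [ffun i => (P i).2]; split; first by apply: smod0; apply: imm_smod.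
    split; first by move=> i; rewrite ffunE; case: (hP i) => _ [].
    by rewrite phi0 add0r.
  by apply/ffunP => i; rewrite !ffunE; case: (hP i) => _ [].
have [z [h [hz [hh e]]]] := hphi.
have hxz : H0 (M:=M) m (x - z).
  apply: K_lem => i.
  have := congr1 (fun f : {ffun 'I_s -> M} => f i) e; rewrite /= !ffunE => ei.
  by rewrite scalerDr scalerN ei addrAC subrr add0r; apply: hh.
exists z, (x - z); split => //; split => //.
by rewrite addrC subrK.
Qed.

End Main.


Lemma sadd_pow_mono (R : comNzRingType) (M : lmodType R) (m : R -> Prop) p q (x : M) :
  (q <= p)%N ->
  submod_add (ideal_mul_mod (M:=M) (ideal_pow m p)) (H0 (M:=M) m) x ->
  submod_add (ideal_mul_mod (M:=M) (ideal_pow m q)) (H0 (M:=M) m) x.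
Proof.
move=> hqp [v [h [hv [hh ->]]]]; exists v, h; split => //.
exact: imm_pow_mono hqp hv.
Qed.

Lemma main_k (R : comNzRingType) (M : lmodType R) (m : R -> Prop)
  (hR : noetherian R) (hm : ideal m) (hfg : fin_gen M) k : forall l,
  exists n, (l < n)%N /\ forall x : M,
   (forall b, ideal_pow m k b ->
      submod_add (ideal_mul_mod (M:=M) (ideal_pow m n)) (H0 (M:=M) m) (b *: x)) ->
   submod_add (ideal_mul_mod (M:=M) (ideal_pow m l)) (H0 (M:=M) m) x.
Proof.
have [gs hgs] := fg_ideal hR hm.
elim: k => [|k IH] l.
  exists l.+1; split => // x hx.
  have := hx 1 I; rewrite scale1r; apply: sadd_pow_mono; exact: leqnSn.
have [n1 hn1] := core hgs hR hfg l.
have [n2 [hlt hn2]] := IH (maxn n1 l).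
exists n2; split; first exact: leq_ltn_trans (leq_maxr _ _) hlt.
move=> x hx; apply: hn1 => a ha.
apply: (sadd_pow_mono (leq_maxl n1 l)); apply: hn2 => b hb.
by rewrite scalerA mulrC; apply: hx; apply: pow_mul.
Qed.

Unset Implicit Arguments.

Theorem lemma2p3 (R : comNzRingType) (M : lmodType R) (m : R -> Prop)
  (hnoeth : noetherian R) (hloc : local_ring m) (hfg : fin_gen M)
  (hdim : mod_dim_ge M 1) (k l : nat) (hk : (0 < k)%N) (hl : (0 < l)%N) :
  exists n3 : nat, (l < n3)%N /\
    forall x : M,
      submod_colon (submod_add (ideal_mul_mod (M:=M) (ideal_pow m n3)) (H0 (M:=M) m))
                   (ideal_pow m k) x ->
      submod_add (ideal_mul_mod (M:=M) (ideal_pow m l)) (H0 (M:=M) m) x.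
Proof.
have hm : ideal m by case: hloc => [[h _] _].
have [n [hn hx]] := main_k hnoeth hm hfg k l.
by exists n; split => // x hcol; apply: hx => b hb; apply: hcol.
Qed.
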